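(* Let $\{(x_i,y_i)\}_{i=1}^n\subset\mathbb{R}^d\times\{\pm1\}$ be linearly separable (there is $w^*$ with $\mathrm{sign}(\langle w^*,x_i\rangle)=y_i$ for all $i$), and let $L(w)=\frac1n\sum_{i=1}^n\ell(y_i\langle w,x_i\rangle)$ with $\ell$ differentiable, decreasing, convex, not attaining its minimum, and $\inf\ell=0$. Let $\psi$ be a differentiable strictly convex potential on $\mathbb{R}^d$ for which mirror descent $\nabla\psi(w_{t+1})=\nabla\psi(w_t)-\eta\nabla L(w_t)$ is well defined. If $\eta$ is small enough that $\psi-\eta L$ is convex, then $L(w_t)\to0$ as $t\to\infty$, and hence $\lim_{t\to\infty}\|w_t\|=\infty$ for any norm $\|\cdot\|$ on $\mathbb{R}^d$. *)

(* Defs.v *)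
From HB Require Import structures.
From mathcomp Require Import all_boot all_order all_algebra.
From mathcomp Require Import all_classical all_reals all_analysis.
Set Implicit Arguments. Unset Strict Implicit. Unset Printing Implicit Defensive.
Import Order.TTheory GRing.Theory Num.Theory.
Import numFieldNormedType.Exports.
Local Open Scope ring_scope.

Definition dotv (R : realType) (d : nat) (u v : 'rV[R]_d) : R :=
  \sum_(j < d) u ord0 j * v ord0 j.

Definition convex_fun (R : realType) (V : lmodType R) (f : V -> R) : Prop :=
  forall (x y : V) (t : R), 0 <= t -> t <= 1 ->
    f (t *: x + (1 - t) *: y) <= t * f x + (1 - t) * f y.

Definition strictly_convex_fun (R : realType) (V : lmodType R) (f : V -> R) : Prop :=
  forall (x y : V) (t : R), x != y -> 0 < t -> t < 1 ->
    f (t *: x + (1 - t) *: y) < t * f x + (1 - t) * f y.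

Definition emp_loss (R : realType) (d n : nat) (l : R -> R)
  (x : 'I_n -> 'rV[R]_d) (y : 'I_n -> R) (w : 'rV[R]_d) : R :=
  n%:R^-1 * \sum_(i < n) l (y i * dotv w (x i)).

Definition is_norm (R : realType) (d : nat) (N : 'rV[R]_d -> R) : Prop :=
  [/\ forall v, 0 <= N v,
      forall v, N v = 0 -> v = 0,
      forall (a : R) v, N (a *: v) = `|a| * N v
    & forall u v, N (u + v) <= N u + N v].

(* Main.v *)
Require Import Defs.
From HB Require Import structures.
From mathcomp Require Import all_boot all_order all_algebra.
From mathcomp Require Import all_classical all_reals all_analysis.
From mathcomp Require Import ring lra.
Import Order.TTheory GRing.Theory Num.Theory.
Import numFieldNormedType.Exports.
Local Open Scope classical_set_scope.
Local Open Scope ring_scope.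

Lemma convex_tangent (R : realType) (V : normedModType R) (f : V -> R) (a b : V) :
  convex_fun f -> differentiable f a -> f a + 'd f a (b - a) <= f b.
Proof.
move=> cf dfa.
rewrite -(@deriveE _ _ _ f a (b - a) dfa) -lerBrDl.
have der := @diff_derivable _ _ _ f a (b - a) dfa.
rewrite /derive.
have der' : (fun h : R => h^-1 *: ((f \o shift a) (h *: (b - a)) - f a)) @ 0^'+ --> lim ((fun h : R => h^-1 *: ((f \o shift a) (h *: (b - a)) - f a)) @ 0^').
  apply: cvg_trans der; apply: cvg_fmap2; apply: within_subset => // h /= h0; exact: lt0r_neq0.
apply: (cvgr_to_le der').
near=> h.
  have h0 : 0 < h by near: h; exact: nbhs_right_gt.
  have h1 : h < 1 by near: h; exact: nbhs_right_lt.
  rewrite /= /shift -[X in X <= _](mulKf (lt0r_neq0 h0)) ler_pdivrMl // [X in _ <= X]mulrC.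
  have -> : forall X : R, h * (h^-1 *: X) = X.
    by move=> X; rewrite [_ *: _]/(_ * _) mulrA mulfV ?mul1r // lt0r_neq0.
  have e : h *: (b - a) + a = h *: b + (1 - h) *: a.
    by rewrite scalerBr scalerBl scale1r addrA addrAC.
  rewrite e lerBlDr.
  apply: (le_trans (cf b a h (ltW h0) (ltW h1))).
  lra.
Unshelve. all: by end_near.
Qed.

Lemma dotvZZ (R : realType) d (a b : R) (u v z : 'rV[R]_d) :
  dotv (a *: u + b *: v) z = a * dotv u z + b * dotv v z.
Proof.
rewrite /dotv !mulr_sumr -big_split /=; apply: eq_bigr => j _.
by rewrite !mxE mulrDl !mulrA.
Qed.

Lemma emp_loss_convex (R : realType) d n (l : R -> R) (x : 'I_n -> 'rV[R]_d) y :
  convex_fun l -> convex_fun (emp_loss l x y).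
Proof.
move=> cl u v t t0 t1; rewrite /emp_loss.
rewrite mulrCA [X in _ <= _ + X]mulrCA -mulrDr ler_wpM2l ?invr_ge0 ?ler0n //.
rewrite !mulr_sumr -big_split /=; apply: ler_sum => i _.
rewrite dotvZZ.
have -> : y i * (t * dotv u (x i) + (1 - t) * dotv v (x i)) =
   t * (y i * dotv u (x i)) + (1 - t) * (y i * dotv v (x i)) by ring.
exact: cl.
Qed.

Lemma dotv_diff (R : realType) d (c : R) (z w : 'rV[R]_d) :
  differentiable (fun u => c * dotv u z) w.
Proof.
have -> : (fun u => c * dotv u z) = (cst c) * (\sum_(j < d) (fun u : 'rV[R]_d => u ord0 j) * cst (z ord0 j)).
  by apply/funext => u; rewrite /dotv /= fct_sumE.
apply: differentiableM; first exact: differentiable_cst.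
apply: differentiable_sum => j; apply: differentiableM; last exact: differentiable_cst.
exact: differentiable_coord.
Qed.

Lemma emp_loss_diff (R : realType) d n (l : R -> R) (x : 'I_n -> 'rV[R]_d) y w :
  (forall u : R, differentiable l u) -> differentiable (emp_loss l x y) w.
Proof.
move=> dl.
have -> : emp_loss l x y = n%:R^-1 *: \sum_(i < n) (l \o (fun u => y i * dotv u (x i))).
  by apply/funext => u; rewrite /emp_loss /= fct_sumE.
apply: differentiableZ; apply: differentiable_sum => i.
apply: differentiable_comp; first exact: dotv_diff.
exact: dl.
Qed.

Definition breg {R : realType} {V : normedModType R} (psi : V -> R) (u w : V) :=
  psi u - psi w - 'd psi w (u - w).

Lemma md_step (R : realType) (V : normedModType R) (psi L : V -> R) (eta : R)
  (w0 w1 u : V) :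
  convex_fun (fun v => psi v - eta * L v) -> convex_fun L ->
  differentiable psi w0 -> differentiable L w0 ->
  (forall v, 'd psi w1 v = 'd psi w0 v - eta * 'd L w0 v) ->
  0 <= eta ->
  eta * (L w1 - L u) <= breg psi u w0 - breg psi u w1.
Proof.
move=> ch cL dpsi dL upd eta0.
have dh : differentiable (psi - eta *: L) w0.
  by apply: differentiableB => //; apply: differentiableZ.
have hE : (fun v => psi v - eta * L v) = psi - eta *: L by apply/funext.
have dhE : forall v, 'd (psi - eta *: L) w0 v = 'd psi w1 v.
  move=> v; rewrite upd.
  have := congr1 (fun F => F v) (diffB dpsi (differentiableZ eta dL)).
  move=> /= ->.
  have := congr1 (fun F => F v) (diffZ eta dL).
  by move=> /= ->.
have T1 := @convex_tangent _ _ _ w0 w1 ch; rewrite hE in T1; have {}T1 := T1 dh.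
rewrite dhE /= in T1.
have T2 := @convex_tangent _ _ _ w0 u cL dL.
have E1 := upd (u - w0).
have E2 : 'd psi w1 (u - w0) = 'd psi w1 (u - w1) + 'd psi w1 (w1 - w0).
  by rewrite -linearD addrA subrK.
rewrite /breg.
have T3 := ler_wpM2l eta0 T2.
rewrite mulrDr in T3; rewrite mulrBr.
lra.
Qed.

Lemma coord_le_norm (R : realType) d (v : 'rV[R]_d) j : `|v ord0 j| <= `|v|.
Proof.
have /mapP[k Hk ->] : `|v ord0 j| \in [seq `|v x.1 x.2| | x : 'I_1 * 'I_d].
  by apply/mapP; exists (ord0, j) => //=; rewrite mem_enum.
by rewrite [leRHS]/Num.Def.normr /= mx_normrE; apply/bigmax_geP; right => /=; exists k.
Qed.

Lemma norm_sum (R : realType) d (N : 'rV[R]_d -> R) (I : finType) (f : I -> 'rV[R]_d) :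
  is_norm N -> N (\sum_i f i) <= \sum_i N (f i).
Proof.
case=> N0 _ NZ ND.
have N00 : N 0 = 0 by rewrite -(scale0r 0) NZ normr0 mul0r.
elim/big_ind2: _ => //; first by rewrite N00.
by move=> a b c e H1 H2; apply: (le_trans (ND _ _)); apply: lerD.
Qed.

Lemma norm_le_C (R : realType) d (N : 'rV[R]_d -> R) :
  is_norm N -> forall v, N v <= (\sum_(j < d) N (delta_mx ord0 j)) * `|v|.
Proof.
move=> hN v; have [N0 _ NZ ND] := hN.
rewrite {1}(row_sum_delta v). have := @norm_sum R d N _ (fun j : 'I_d => v 0 j *: delta_mx 0 j) hN. move/le_trans; apply.
rewrite mulr_suml; apply: ler_sum => j _; rewrite NZ mulrC.
by apply: ler_wpM2l; [exact: N0 | exact: coord_le_norm].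
Qed.

Lemma norm_cont (R : realType) d (N : 'rV[R]_d -> R) :
  is_norm N -> continuous N.
Proof.
move=> hN; have [N0 _ NZ ND] := hN.
set C := \sum_(j < d) N (delta_mx ord0 j).
have C0 : 0 <= C by apply: sumr_ge0 => j _.
have NN : forall v, N (- v) = N v by move=> v; rewrite -scaleN1r NZ normrN normr1 mul1r.
have rev : forall a b, `|N a - N b| <= N (a - b).
  move=> a b; rewrite ler_norml.
  have h1 := ND (a - b) b; rewrite subrK in h1.
  have h2 := ND (b - a) a; rewrite subrK -opprB NN in h2.
  apply/andP; split; lra.
move=> a; apply/(@cvgrPdist_lt _ _ _ (nbhs a) (nbhs_filter a)) => e e0.
have eC : 0 < e / (C + 1) by apply: divr_gt0 => //; lra.
near=> b.
apply: (le_lt_trans (rev _ _)); apply: (le_lt_trans (norm_le_C _ _ _ hN _)).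
have H : `|a - b| < e / (C + 1) by near: b; exact: (@cvgr_dist_lt _ _ _ (nbhs a) (nbhs_filter a) id a (@cvg_id _ (nbhs a)) _ eC).
rewrite -/C.
have : (C + 1) * `|a - b| < e by rewrite mulrC -ltr_pdivlMr //; lra.
have : C * `|a - b| <= (C + 1) * `|a - b| by apply: ler_wpM2r => //; lra.
lra.
Unshelve. all: by end_near.
Qed.

Lemma norm_lower (R : realType) d (N : 'rV[R]_d -> R) :
  is_norm N -> exists2 m, 0 < m & forall w, m * `|w| <= N w.
Proof.
move=> hN; have [N0 Nd NZ ND] := hN.
case: (pselect (exists v : 'rV[R]_d, v != 0)) => [[v v0]|nov]; last first.
  exists 1 => // w; have -> : w = 0 by have [//|w0] := eqVneq w 0; exfalso; apply: nov; exists w.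
  by rewrite normr0 mulr0; exact: N0.
set S := [set u : 'rV[R]_d | `|u| = 1].
have S0 : S !=set0.
  exists (`|v|^-1 *: v); rewrite /S /= normrZ normfV normr_id mulVf // normr_eq0.
  exact: v0.
have cS : compact S.
  apply: bounded_closed_compact.
    rewrite /=; apply: (filterS _ (@nbhs_pinfty_ge R 1 (num_real 1))) => M M1 u Su. by rewrite /= Su.
  apply: (@preimage_closed _ _ (fun u : 'rV[R]_d => `|u|) [set x : R | x = 1]); last exact: closed_eq.
  by move=> u _; exact: norm_continuous.
have [c Sc cmin] := EVT_min_rV S0 cS (continuous_subspaceT (norm_cont _ _ _ hN)).
have c1 : `|c| = 1 by move: Sc; rewrite inE.
have Nc : 0 < N c.
  rewrite lt0r N0 andbT; apply/negP => /eqP /Nd c0.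
  by move: c1; rewrite c0 normr0 => /eqP; rewrite eq_sym oner_eq0.
exists (N c) => // w.
have [->|w0] := eqVneq w 0; first by rewrite normr0 mulr0; exact: N0.
have wp : 0 < `|w| by rewrite normr_gt0.
have := cmin (`|w|^-1 *: w); rewrite NZ normfV normr_id.
rewrite -ler_pdivlMr // mulrC => -> //.
by rewrite inE /S /= normrZ normfV normr_id mulVf // normr_eq0.
Qed.

Lemma dot_bound (R : realType) d (N : 'rV[R]_d -> R) (z : 'rV[R]_d) :
  is_norm N -> exists K, 0 <= K /\ forall w, `|dotv w z| <= K * N w.
Proof.
move=> hN; have [m m0 Hm] := norm_lower _ _ _ hN.
exists ((\sum_(j < d) `|z ord0 j|) / m); split.
  by apply: divr_ge0 => //; [apply: sumr_ge0 => j _ | exact: ltW].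
move=> w.
have H1 : `|dotv w z| <= (\sum_(j < d) `|z ord0 j|) * `|w|.
  rewrite /dotv; apply: (le_trans (ler_norm_sum _ _ _)).
  rewrite mulr_suml; apply: ler_sum => j _; rewrite normrM mulrC.
  by apply: ler_wpM2l => //; exact: coord_le_norm.
apply: (le_trans H1); rewrite -mulrA; apply: ler_wpM2l; first by apply: sumr_ge0.
by rewrite ler_pdivlMl // mulrC.
Qed.


Lemma strict_convex_convex (R : realType) (V : lmodType R) (f : V -> R) :
  strictly_convex_fun f -> convex_fun f.
Proof.
move=> sf a b t t0 t1.
have [->|ab] := eqVneq a b.
  by rewrite -scalerDl -mulrDl addrC subrK scale1r mul1r.
have [->|tn0] := eqVneq t 0.
  by rewrite scale0r add0r subr0 scale1r mul0r add0r mul1r.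
have [->|tn1] := eqVneq t 1.
  by rewrite scale1r subrr scale0r addr0 mul1r mul0r addr0.
apply: ltW; apply: sf => //; first by rewrite lt0r tn0.
by rewrite lt_neqAle tn1.
Qed.

Lemma breg_ge0 (R : realType) (V : normedModType R) (psi : V -> R) u w :
  convex_fun psi -> differentiable psi w -> 0 <= breg psi u w.
Proof.
move=> cp dp; have := @convex_tangent _ _ _ w u cp dp.
rewrite /breg; lra.
Qed.

Lemma breg_self (R : realType) (V : normedModType R) (psi : V -> R) w :
  breg psi w w = 0.
Proof. by rewrite /breg !subrr linear0 subrr. Qed.

Lemma loss_ge0 (R : realType) d n (l : R -> R) (x : 'I_n -> 'rV[R]_d) y w :
  (forall u, 0 <= l u) -> 0 <= emp_loss l x y w.
Proof.
move=> l0; rewrite /emp_loss; apply: mulr_ge0; first by rewrite invr_ge0.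
by apply: sumr_ge0.
Qed.

Lemma loss_ge_term (R : realType) d n (l : R -> R) (x : 'I_n -> 'rV[R]_d) y w i :
  (forall u, 0 <= l u) -> n%:R^-1 * l (y i * dotv w (x i)) <= emp_loss l x y w.
Proof.
move=> l0; rewrite /emp_loss; apply: ler_wpM2l; first by rewrite invr_ge0.
rewrite (bigD1 i) //= lerDl; exact: sumr_ge0.
Qed.

Lemma ldec_le (R : realType) (l : R -> R) :
  (forall u v : R, u < v -> l v < l u) -> forall u v, u <= v -> l v <= l u.
Proof.
move=> ld u v; rewrite le_eqVlt => /orP[/eqP ->//|uv]; exact/ltW/ld.
Qed.

Lemma dotvZ (R : realType) d (c : R) (u z : 'rV[R]_d) :
  dotv (c *: u) z = c * dotv u z.
Proof.
rewrite /dotv mulr_sumr; apply: eq_bigr => j _; by rewrite mxE mulrA.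
Qed.

Lemma sep_small (R : realType) d n (l : R -> R) (x : 'I_n -> 'rV[R]_d) y :
  (0 < n)%N -> (forall i, y i = 1 \/ y i = -1) ->
  (exists wstar : 'rV[R]_d, forall i, Num.sg (dotv wstar (x i)) = y i) ->
  (forall u v : R, u < v -> l v < l u) ->
  (forall e : R, 0 < e -> exists u : R, l u < e) ->
  forall e : R, 0 < e -> exists u, emp_loss l x y u < e.
Proof.
move=> n0 y1 [ws hws] ld linf e e0.
have mpos : forall i, 0 < y i * dotv ws (x i).
  move=> i; have := hws i; case: (y1 i) => -> /eqP; rewrite sgr_cp0 => h; lra.
have [v lv] := linf e e0.
set c := `|v| * \sum_(i < n) (y i * dotv ws (x i))^-1.
exists (c *: ws); rewrite /emp_loss.
apply: (@le_lt_trans _ _ (n%:R^-1 * (n%:R * l v))); last first.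
  by rewrite mulrA mulVf ?mul1r // pnatr_eq0 -lt0n.
apply: ler_wpM2l; first by rewrite invr_ge0.
have -> : n%:R * l v = \sum_(i < n) l v by rewrite sumr_const card_ord mulr_natl.
apply: ler_sum => i _.
apply: ldec_le => //; rewrite dotvZ mulrCA.
apply: (le_trans (ler_norm v)).
have mi := mpos i.
rewrite /c -mulrA; rewrite -[X in X <= _]mulr1; apply: ler_wpM2l => //.
rewrite (bigD1 i) //= mulrDl mulVf ?lt0r_neq0 //.
rewrite lerDl; apply: mulr_ge0; last exact: ltW.
by apply: sumr_ge0 => j _; rewrite invr_ge0; exact: ltW.
Qed.

Theorem lemma3 (R : realType) (d n : nat) (x : 'I_n -> 'rV[R]_d) (y : 'I_n -> R)
  (l : R -> R) (psi : 'rV[R]_d -> R) (eta : R) (w : nat -> 'rV[R]_d) :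
  (0 < n)%N ->
  (forall i, y i = 1 \/ y i = -1) ->
  (exists wstar : 'rV[R]_d, forall i, Num.sg (dotv wstar (x i)) = y i) ->
  (forall u : R, differentiable l u) ->
  (forall u v : R, u < v -> l v < l u) ->
  convex_fun l ->
  (forall u : R, exists v : R, l v < l u) ->
  (forall u : R, 0 <= l u) ->
  (forall e : R, 0 < e -> exists u : R, l u < e) ->
  (forall v : 'rV[R]_d, differentiable psi v) ->
  strictly_convex_fun psi ->
  0 < eta ->
  convex_fun (fun v => psi v - eta * emp_loss l x y v) ->
  (forall (t : nat) (v : 'rV[R]_d),
     'd psi (w t.+1) v = 'd psi (w t) v - eta * 'd (emp_loss l x y) (w t) v) ->
  (fun t => emp_loss l x y (w t)) @ \oo --> (0 : R) /\
  (forall N : 'rV[R]_d -> R, is_norm N ->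
     forall M : R, exists T : nat, forall t : nat, (T <= t)%N -> M < N (w t)).
Proof.
move=> n0 y1 sep dl ldec lcvx _ l0 linf dpsi spsi eta0 hcvx upd.
set L := emp_loss l x y.
have Lcvx : convex_fun L := emp_loss_convex _ _ _ _ x y lcvx.
have dL : forall v, differentiable L v := fun v => emp_loss_diff _ _ _ _ x y v dl.
have pcvx := strict_convex_convex _ _ _ spsi.
have step : forall s u, eta * (L (w s.+1) - L u) <= breg psi u (w s) - breg psi u (w s.+1).
  move=> s u; exact: (@md_step _ _ psi L eta (w s) (w s.+1) u hcvx Lcvx (dpsi _) (dL _) (upd s) (ltW eta0)).
have mono : forall s, L (w s.+1) <= L (w s).
  move=> s; have := step s (w s); rewrite breg_self.
  have := breg_ge0 _ _ _ (w s) (w s.+1) pcvx (dpsi (w s.+1)) => B0 H.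
  rewrite -subr_le0 -(pmulr_rle0 _ eta0); lra.
have ind : forall u T, eta * T%:R * (L (w T) - L u) + breg psi u (w T) <= breg psi u (w 0).
  move=> u; elim=> [|T IH]; first by rewrite mulr0 mul0r add0r.
  have := step T u; have := mono T.
  have K0 : 0 <= eta * T%:R by apply: mulr_ge0 => //; exact: ltW.
  move=> mT sT.
  have := ler_wpM2l K0 mT => mK.
  have E : eta * (T%:R + 1) * (L (w T.+1) - L u) = eta * T%:R * (L (w T.+1) - L u) + eta * (L (w T.+1) - L u) by ring.
  lra.
have conv : (fun t => L (w t)) @ \oo --> (0 : R).
  apply/cvgrPdist_lt => e e0.
  have [u Lu] := sep_small _ _ _ _ x y n0 y1 sep ldec linf (e / 2) ltac:(by apply: divr_gt0).
  set B := breg psi u (w 0).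
  have B0 : 0 <= B by exact: (breg_ge0 _ _ _ u (w 0) pcvx (dpsi _)).
  near=> t.
  have tpos : 2 * B / (eta * e) < t%:R by near: t; exact: nbhs_infty_gtr.
  rewrite sub0r normrN ger0_norm; last exact: loss_ge0.
  rewrite ltNge; apply/negP => Le.
  have t0 : 0 <= t%:R :> R by [].
  have K0 : 0 <= eta * t%:R by apply: mulr_ge0 => //; exact: ltW.
  have := ind u t; rewrite -/B => It.
  have Bt := breg_ge0 _ _ _ u (w t) pcvx (dpsi (w t)).
  have H1 : eta * t%:R * (e / 2) <= eta * t%:R * (L (w t) - L u).
    by apply: ler_wpM2l => //; rewrite -/L in Lu; lra.
  have ee : 0 < eta * e by apply: mulr_gt0.
  rewrite ltr_pdivrMr // in tpos.
  have : eta * t%:R * (e / 2) = t%:R * (eta * e) / 2 by field.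
  lra.
split; first exact: conv.
move=> Nf hN M.
pose i0 := Ordinal n0.
have [K [K0 HK]] := dot_bound _ _ _ (x i0) hN.
set M' := Num.max M 0.
have M'0 : 0 <= M' by rewrite le_max lexx orbT.
have MM' : M <= M' by rewrite le_max lexx.
set c0 := n%:R^-1 * l (K * M').
have c0p : 0 < c0.
  apply: mulr_gt0; first by rewrite invr_gt0 ltr0n.
  apply: (le_lt_trans (l0 (K * M' + 1))); apply: ldec; lra.
have := (cvgrPdist_lt _ _).1 conv c0 c0p.
case=> T _ HT; exists T => t Tt.
have := HT t Tt; rewrite /= sub0r normrN ger0_norm; last exact: loss_ge0.
move=> Lt.
rewrite ltNge; apply/negP => NM.
have h1 : y i0 * dotv (w t) (x i0) <= K * M'.
  apply: (le_trans (ler_norm _)); rewrite normrM.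
  have : `|y i0| = 1 by case: (y1 i0) => ->; rewrite ?normrN normr1.
  move=> ->; rewrite mul1r; apply: (le_trans (HK _)).
  apply: ler_wpM2l => //; lra.
have h2 := ldec_le _ _ ldec _ _ h1.
have h3 := loss_ge_term _ _ _ _ x y (w t) i0 l0.
have h4 : c0 <= n%:R^-1 * l (y i0 * dotv (w t) (x i0)).
  by apply: ler_wpM2l => //; rewrite invr_ge0.
rewrite -/L in h3; lra.
Unshelve. all: by end_near.
Qed.
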